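(* There exist constants $c_1,c_2>0$ and an infinite family of graphs $G$ (with $n$ vertices and $m$ edges, $n\to\infty$) such that each $G$ in the family admits a composition-minimal clique cover $\mathcal{C}$ with $c_1 m\le|\mathcal{C}|\le c_2 m$ and $c_1 nm\le\|\mathcal{C}\|\le c_2 nm$, i.e. $|\mathcal{C}|=\Theta(m)$ but $\|\mathcal{C}\|=\Theta(nm)$.
   Context: All graphs are finite, simple, undirected, with no isolated vertices; $n=|V|$, $m=|E|$. A non-edge is an unordered pair of distinct non-adjacent vertices. A clique is a vertex set inducing a complete subgraph. $\|\mathcal{F}\|:=\sum_{F\in\mathcal{F}}|F|$ for a family of finite sets. A clique cover of $G$ is an indexed family $\{C_\ell\}_{\ell\in I}$ of cliques of $G$ such that every edge lies in at least one member; it is composition-minimal if for every two distinct indices $i\ne j$ there exist $u\in C_i$, $v\in C_j$ with $\{u,v\}$ a non-edge. *)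

(* Defs.v *)
From mathcomp Require Import all_boot all_order all_algebra.
Set Implicit Arguments. Unset Strict Implicit. Unset Printing Implicit Defensive.
Import Order.TTheory GRing.Theory Num.Theory.

Definition simple_graph (n : nat) (e : rel 'I_n) : Prop :=
  symmetric e /\ irreflexive e /\ (forall v : 'I_n, exists u : 'I_n, e v u).

Definition num_edges (n : nat) (e : rel 'I_n) : nat :=
  #|[set p : 'I_n * 'I_n | (p.1 < p.2)%N && e p.1 p.2]|.

Definition non_edge (n : nat) (e : rel 'I_n) (u v : 'I_n) : Prop :=
  u != v /\ ~~ e u v.

Definition is_clique (n : nat) (e : rel 'I_n) (C : {set 'I_n}) : Prop :=
  forall u v, u \in C -> v \in C -> u != v -> e u v.

Definition clique_cover (n k : nat) (e : rel 'I_n) (C : 'I_k -> {set 'I_n}) : Prop :=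
  (forall i, is_clique e (C i)) /\
  (forall u v, e u v -> exists i, u \in C i /\ v \in C i).

Definition composition_minimal (n k : nat) (e : rel 'I_n)
    (C : 'I_k -> {set 'I_n}) : Prop :=
  forall i j : 'I_k, i != j ->
    exists u v, u \in C i /\ v \in C j /\ non_edge e u v.

Definition cover_weight (n k : nat) (C : 'I_k -> {set 'I_n}) : nat :=
  \sum_(i < k) #|C i|.

(* Main.v *)
Require Import Defs.
From mathcomp Require Import all_boot all_order all_algebra.
From mathcomp Require Import zify lra.
Import Order.TTheory GRing.Theory Num.Theory.
Set Implicit Arguments. Unset Strict Implicit. Unset Printing Implicit Defensive.

Lemma posE u t : 0 < t -> u < t + t -> u %% t = if t <= u then u - t else u.
Proof.
move=> H1 H2. case: leqP => h /=.
  by rewrite -{1}(subnK h) modnDr modn_small //; lia.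
by rewrite modn_small.
Qed.

Lemma vertE u t : 0 < t -> u < t + t -> u %% t + t * (t <= u) = u.
Proof. move=> H1 H2; rewrite posE //; case: leqP => h /=; lia. Qed.

Lemma vert_lt t (l : 'I_t) (b : bool) : l + t * b < t + t.
Proof. have := ltn_ord l; case: b => /=; lia. Qed.

Definition vert t (l : 'I_t) (b : bool) : 'I_(t+t) := @Ordinal (t+t) _ (vert_lt l b).

Lemma vert_mod t (l : 'I_t) b : (vert l b : nat) %% t = l.
Proof. by rewrite /= mulnC addnC modnMDl modn_small. Qed.

Lemma vert_side t (l : 'I_t) b : (t <= vert l b) = b.
Proof. have := ltn_ord l; case: b => /=; lia. Qed.

Lemma vert_inj t (l l' : 'I_t) b b' : vert l b = vert l' b' -> l = l' /\ b = b'.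
Proof.
move=> E; split.
  have := congr1 (fun x : 'I_(t+t) => (x:nat) %% t) E.
  by rewrite /= !vert_mod => H; apply: val_inj.
by rewrite -(vert_side l b) -(vert_side l' b') E.
Qed.

Definition eG t : rel 'I_(t+t) := fun u v => (u : nat) %% t != (v : nat) %% t.

Definition bb t (p : 'I_t * 'I_t) (l : 'I_t) : bool := (l == p.1) || (l == p.2).

Definition D t (p : 'I_t * 'I_t) : {set 'I_(t+t)} := [set vert l (bb p l) | l : 'I_t].

Definition Iset t : {set 'I_t * 'I_t} := [set p : 'I_t * 'I_t | (p.1 : nat) <= p.2].

Lemma card_D t (p : 'I_t * 'I_t) : #|D p| = t.
Proof.
rewrite card_imset ?card_ord //.
by move=> l l' /vert_inj [].
Qed.

Lemma D_clique t (p : 'I_t * 'I_t) : is_clique (@eG t) (D p).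
Proof.
move=> u v /imsetP [l _ ->] /imsetP [l' _ ->] Hne.
rewrite /eG !vert_mod; apply: contra Hne => /eqP E.
have E' : l = l' by apply: val_inj.
by rewrite E'.
Qed.

Lemma mem_D t (p : 'I_t * 'I_t) (u : 'I_(t+t)) (l : 'I_t) :
  0 < t -> (l : nat) = u %% t -> bb p l = (t <= u) -> u \in D p.
Proof.
move=> Ht Hl Hb; apply/imsetP; exists l => //; apply: val_inj.
by rewrite /= Hl Hb vertE.
Qed.

Lemma cover_ok t (u v : 'I_(t+t)) : 2 < t -> eG u v ->
  exists p, p \in Iset t /\ u \in D p /\ v \in D p.
Proof.
move=> Ht3 Huv.
have Ht : 0 < t by lia.
pose a := Ordinal (ltn_pmod u Ht).
pose c := Ordinal (ltn_pmod v Ht).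
have Hac : (a : nat) != c by [].
have bbE : forall (p : 'I_t * 'I_t) (l : 'I_t),
   bb p l = ((l : nat) == p.1) || ((l : nat) == p.2) by [].
case Eu: (t <= u); case Ev: (t <= v).
- case: (leqP a c) => h.
  + exists (a, c); rewrite inE /=; split => //; split.
      by apply: (mem_D (l := a)) => //; rewrite Eu bbE /= eqxx.
    by apply: (mem_D (l := c)) => //; rewrite Ev bbE /= eqxx orbT.
  + exists (c, a); rewrite inE /=; split; first exact: ltnW. split.
      by apply: (mem_D (l := a)) => //; rewrite Eu bbE /= eqxx orbT.
    by apply: (mem_D (l := c)) => //; rewrite Ev bbE /= eqxx.
- exists (a, a); rewrite inE /=; split => //; split.
    by apply: (mem_D (l := a)) => //; rewrite Eu bbE /= eqxx.
  apply: (mem_D (l := c)) => //; rewrite Ev bbE /=.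
  by rewrite eq_sym (negbTE Hac).
- exists (c, c); rewrite inE /=; split => //; split.
    apply: (mem_D (l := a)) => //; rewrite Eu bbE /=.
    by rewrite (negbTE Hac).
  by apply: (mem_D (l := c)) => //; rewrite Ev bbE /= eqxx.
- have [x [Hx [Hxa Hxc]]] : exists x, x < t /\ x != a /\ x != c.
    case: (boolP ((0 != a) && (0 != c))) => [/andP [h1 h2]|h].
      by exists 0; split => //; lia.
    case: (boolP ((1 != a) && (1 != c))) => [/andP [h1 h2]|h'].
      by exists 1; split => //; lia.
    exists 2; move: h h'; rewrite !negb_and !negbK; lia.
  pose l := Ordinal Hx.
  exists (l, l); rewrite inE /=; split => //; split.
    apply: (mem_D (l := a)) => //; rewrite Eu bbE /=.
    by rewrite orbb eq_sym (negbTE Hxa).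
  apply: (mem_D (l := c)) => //; rewrite Ev bbE /=.
  by rewrite orbb eq_sym (negbTE Hxc).
Qed.

Lemma bb_inj t (p q : 'I_t * 'I_t) : p \in Iset t -> q \in Iset t ->
  (forall l, bb p l = bb q l) -> p = q.
Proof.
case: p => [p1 p2]; case: q => [q1 q2]; rewrite !inE /= => H1 H2 E.
have e1 := E p1; have e2 := E p2; have e3 := E q1; have e4 := E q2.
rewrite /bb /= !eqxx ?orbT /= in e1 e2 e3 e4.
rewrite -!val_eqE in e1 e2 e3 e4.
apply/eqP; rewrite xpair_eqE -!val_eqE.
move: e1 e2 e3 e4 H1 H2; clear E; case: p1 => a ?; case: p2 => b ?; case: q1 => c ?; case: q2 => d ? /=; lia.
Qed.

Lemma k_lower t : t * t <= 2 * #|Iset t|.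
Proof.
pose sw := fun p : 'I_t * 'I_t => (p.2, p.1).
have inj : injective sw by case=> [x1 x2] [y1 y2] [-> ->].
have Hc := card_preimset (Iset t) inj.
have HT : #|[set: 'I_t * 'I_t]| = t * t by rewrite cardsT card_prod card_ord.
have Hs : [set: 'I_t * 'I_t] \subset Iset t :|: sw @^-1: Iset t.
  apply/subsetP => p _; rewrite !inE /=; case: leqP => //= h.
  exact: ltnW.
have := subset_leq_card Hs; rewrite HT.
have := cardsUI (Iset t) (sw @^-1: Iset t); rewrite Hc; lia.
Qed.

Lemma k_upper t : #|Iset t| <= t * t.
Proof. by have := max_card (mem (Iset t)); rewrite card_prod card_ord. Qed.

Lemma m_upper t : num_edges (@eG t) <= (t + t) * (t + t).
Proof. by have := max_card (mem [set p : 'I_(t+t) * 'I_(t+t) | (p.1 < p.2)%N && eG p.1 p.2]); rewrite card_prod card_ord. Qed.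

Lemma m_lower t : t * t - t <= num_edges (@eG t).
Proof.
pose K := [set q : 'I_t * 'I_t | q.1 != q.2].
pose g := fun q : 'I_t * 'I_t => (vert q.1 false, vert q.2 true).
have ginj : injective g.
  move=> [x1 x2] [y1 y2] E.
  have [E1 _] := vert_inj (congr1 fst E).
  have [E2 _] := vert_inj (congr1 snd E).
  by rewrite /= in E1 E2; rewrite E1 E2.
have HK : #|K| + #|~: K| = t * t by rewrite cardsC card_prod card_ord.
have HD : #|~: K| <= t.
  have : ~: K \subset [set (i, i) | i : 'I_t].
    apply/subsetP => [[x y]]; rewrite !inE /= negbK => /eqP ->.
    by apply/imsetP; exists y.
  move/subset_leq_card => h; apply: leq_trans h _.
  by have := leq_imset_card (fun i : 'I_t => (i, i)) (mem 'I_t); rewrite card_ord.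
have HE : g @: K \subset [set p : 'I_(t+t) * 'I_(t+t) | (p.1 < p.2)%N && eG p.1 p.2].
  apply/subsetP => p /imsetP [[x y] Hxy ->]; rewrite !inE /=.
  rewrite inE /= in Hxy.
  apply/andP; split.
    have := ltn_ord x; lia.
  rewrite /eG !vert_mod; exact: Hxy.
have := subset_leq_card HE; rewrite card_imset //.
rewrite /num_edges; lia.
Qed.

Lemma eG_simple t : 1 < t -> simple_graph (@eG t).
Proof.
move=> Ht; split; [|split].
- by move=> u v; rewrite /eG eq_sym.
- by move=> u; rewrite /eG eqxx.
- move=> v.
  have H0 : 0 < t + t by lia.
  have H1 : 1 < t + t by lia.
  case: (boolP ((v : nat) %% t == 0)) => h.
  + exists (Ordinal H1); rewrite /eG /= (eqP h) modn_small //.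
  + exists (Ordinal H0); rewrite /eG /= mod0n.
    exact: h.
Qed.

Local Open Scope ring_scope.

Theorem mainTheorem9 :
  exists c1 c2 : rat, 0 < c1 /\ 0 < c2 /\
    forall N : nat, exists (n : nat) (e : rel 'I_n),
      (N <= n)%N /\ simple_graph e /\
      exists (k : nat) (C : 'I_k -> {set 'I_n}),
        clique_cover e C /\ composition_minimal e C /\
        c1 * (num_edges e)%:R <= k%:R /\ k%:R <= c2 * (num_edges e)%:R /\
        c1 * (n * num_edges e)%:R <= (cover_weight C)%:R /\
        (cover_weight C)%:R <= c2 * (n * num_edges e)%:R.
Proof.
exists (1/16), 2; split; first by []. split; first by [].
move=> N.
set t := N.+3.
have Ht3 : (2 < t)%N by rewrite /t.
exists (t + t), (@eG t); split; first by rewrite /t; lia.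
split; first by apply: eG_simple; lia.
have Ht0 : (0 < t)%N by lia.
pose o := Ordinal Ht0.
have Hx0 : (o, o) \in Iset t by rewrite inE.
exists #|Iset t|, (fun i => D (enum_val i)).
have Hw : cover_weight (fun i : 'I_#|Iset t| => D (enum_val i)) = (#|Iset t| * t)%N.
  rewrite /cover_weight (eq_bigr (fun _ => t)) => [|i _].
    by rewrite sum_nat_const card_ord.
  exact: card_D.
split.
  split; first by move=> i; exact: D_clique.
  move=> u v Huv.
  have [p [Hp [Hu Hv]]] := cover_ok Ht3 Huv.
  exists (enum_rank_in Hx0 p); rewrite enum_rankK_in //.
split.
  move=> i j Hij.
  have Hpq : enum_val i != enum_val j :> 'I_t * 'I_t.
    by rewrite (inj_eq enum_val_inj).
  case: (boolP [exists l, bb (enum_val i) l != bb (enum_val j) l]).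
    move=> /existsP [l Hl].
    exists (vert l (bb (enum_val i) l)), (vert l (bb (enum_val j) l)).
    split; first exact: imset_f.
    split; first exact: imset_f.
    split.
      by apply/eqP => /vert_inj [_ E]; rewrite E eqxx in Hl.
    by rewrite /eG !vert_mod eqxx.
  move=> /existsPn H; exfalso; move/negP: Hpq; apply; apply/eqP.
  apply: bb_inj; try exact: enum_valP.
  by move=> l; have := H l; rewrite negbK => /eqP.
rewrite Hw.
have K1 := k_lower t; have K2 := k_upper t.
have M1 := m_upper t; have M2 := m_lower t.
have h3 : (3 * t <= t * t)%N by rewrite leq_mul2r Ht3 orbT.
set k := #|Iset t| in K1 K2 *.
set m := num_edges (@eG t) in M1 M2 *.
have A : (m <= 8 * k)%N by nia.
have B : (k <= 2 * m)%N by lia.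
have C : ((t + t) * m <= 16 * (k * t))%N by nia.
have D : (k * t <= 2 * ((t + t) * m))%N by nia.
move: A B C D; rewrite -!(ler_nat rat) !natrM => A B C D.
set x := (_ * m%:R) in C D *.
set y := (k%:R * t%:R) in C D *.
have Kp : (0 : rat) <= k%:R by rewrite ler0n.
have Mp : (0 : rat) <= m%:R by rewrite ler0n.
have Xp : (0 : rat) <= x by rewrite /x mulr_ge0 ?ler0n.
have Yp : (0 : rat) <= y by rewrite /y mulr_ge0 ?ler0n.
move: (k%:R : rat) (m%:R : rat) x y A B C D Kp Mp Xp Yp => K M X Y A B C D Kp Mp Xp Yp.
split; first lra. split; first lra. split; lra.
Qed.
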